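(* Let $(C,A_\zeta,\mathbb X,A,B;\sigma_1)$ be an invertible node. Then $(C\mathbb X^{-1},A,\mathbb X^{-1},A_\zeta,\mathbb X^{-1}B;\sigma_1)$ is also a node, i.e. with $A$ in the role of $A_\zeta$ and $A_\zeta$ in the role of $A$: $\mathbb X^{-1}(D(A_\zeta))\subseteq D(A_\zeta)$ and $A_\zeta\mathbb X^{-1}u+\mathbb X^{-1}Au+\mathbb X^{-1}B\sigma_1C\mathbb X^{-1}u=0$ for all $u\in D(A)$.
   Context: A Krein space $\mathcal K$ is a Hilbert space with an extra continuous Hermitian (possibly indefinite) sesquilinear form; adjoints are with respect to it; $\mathbb C^2$ has its standard inner product. Let $\sigma_1$ be an invertible self-adjoint $2\times2$ matrix. A node $(C,A_\zeta,\mathbb X,A,B;\sigma_1)$ consists of bounded $C:\mathcal K\to\mathbb C^2$, $\mathbb X:\mathcal K\to\mathcal K$, $B:\mathbb C^2\to\mathcal K$ and generators $A,A_\zeta$ of strongly continuous groups on $\mathcal K$ with common dense domain $D(A)=D(A_\zeta)$, such that $\mathbb X(D(A))\subseteq D(A)$ and $A\mathbb Xu+\mathbb XA_\zeta u+B\sigma_1Cu=0$ for all $u\in D(A)$. The node is invertible if $\mathbb X$ is boundedly invertible and $\mathbb X^{-1}(D(A))\subseteq D(A)$. *)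

(* Defs.v *)
From HB Require Import structures.
From mathcomp Require Import all_boot all_order all_algebra.
From mathcomp Require Import complex.
From mathcomp Require Import all_classical all_reals all_analysis.

Set Implicit Arguments.
Unset Strict Implicit.
Unset Printing Implicit Defensive.

Import Order.TTheory GRing.Theory Num.Theory.
Import numFieldNormedType.Exports.
Local Open Scope ring_scope.
Local Open Scope classical_set_scope.

Section Defs.
Variable R : realType.
Local Notation C := R[i].

Definition clinear (U V : lmodType C) (f : U -> V) : Prop :=
  forall (a : C) (u v : U), f (a *: u + v) = a *: f u + f v.

Definition bounded_op (U V : normedModType C) (f : U -> V) : Prop :=
  clinear f /\ exists M : C, forall u : U, `|f u| <= M * `|u|.

(* A Krein space: a (complex) Hilbert space -- a complete normed space whose
   norm comes from an inner product -- together with an additional continuous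
   Hermitian (possibly indefinite) sesquilinear form. *)
Definition is_krein_space (K : completeNormedModType C) : Prop :=
  exists (ip kf : K -> K -> C),
    (forall (a : C) (x y z : K), ip (a *: x + y) z = a * ip x z + ip y z) /\
    (forall x y : K, ip y x = conjc (ip x y)) /\
    (forall x : K, `|x| ^+ 2 = ip x x) /\
    (forall (a : C) (x y z : K), kf (a *: x + y) z = a * kf x z + kf y z) /\
    (forall x y : K, kf y x = conjc (kf x y)) /\
    (exists M : C, forall x y : K, `|kf x y| <= M * `|x| * `|y|).

Definition sc_group (K : normedModType C) (T : R -> K -> K) : Prop :=
  (forall t, bounded_op (T t)) /\
  (forall x, T 0 x = x) /\
  (forall s t x, T (s + t) x = T s (T t x)) /\
  (forall x, continuous (fun t => T t x)).

Definition is_generator (K : normedModType C) (T : R -> K -> K)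
    (D : set K) (A : K -> K) : Prop :=
  (forall x, D x ->
     (fun h : R => ((h%:C)%C)^-1 *: (T h x - x)) @ 0^' --> A x) /\
  (forall (x y : K),
     (fun h : R => ((h%:C)%C)^-1 *: (T h x - x)) @ 0^' --> y -> D x).

Definition is_group_generator (K : normedModType C) (D : set K) (A : K -> K) :=
  exists T : R -> K -> K, sc_group T /\ is_generator T D A.

Definition sigma_ok (s1 : 'M[C]_2) : Prop :=
  s1 \in unitmx /\ map_mx conjc s1^T = s1.

(* The node (Cop, Az, X, A, B; s1), where D = D(A) = D(Az) is the common
   domain of the two generators A and Az. *)
Definition is_node (K : completeNormedModType C) (Cop : K -> 'cV[C]_2)
    (Az X A : K -> K) (B : 'cV[C]_2 -> K) (s1 : 'M[C]_2) (D : set K) : Prop :=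
  sigma_ok s1 /\
  bounded_op Cop /\ bounded_op X /\ bounded_op B /\
  is_group_generator D A /\ is_group_generator D Az /\
  X @` D `<=` D /\
  (forall u, D u -> A (X u) + X (Az u) + B (s1 *m Cop u) = 0).

End Defs.

(* Main.v *)
Require Import Defs.
From HB Require Import structures.
From mathcomp Require Import all_boot all_order all_algebra.
From mathcomp Require Import complex.
From mathcomp Require Import all_classical all_reals all_analysis.
Import Order.TTheory GRing.Theory Num.Theory.
Import numFieldNormedType.Exports.
Local Open Scope ring_scope.
Local Open Scope classical_set_scope.

Lemma bound_abs (R : realType) (U V : normedModType R[i]) (f : U -> V) (M : R[i]) :
  (forall u, `|f u| <= M * `|u|) -> forall u, `|f u| <= `|M| * `|u|.
Proof.
move=> H u; have := H u => h.
have h0 : 0 <= M * `|u| by apply: le_trans h.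
by rewrite -(ger0_norm h0) normrM normr_id in h.
Qed.

Lemma clinear_comp (R : realType) (U V W : lmodType R[i]) (f : U -> V) (g : V -> W) :
  clinear f -> clinear g -> clinear (g \o f).
Proof. by move=> hf hg a u v /=; rewrite hf hg. Qed.

Lemma bounded_comp (R : realType) (U V W : normedModType R[i]) (f : U -> V) (g : V -> W) :
  bounded_op f -> bounded_op g -> bounded_op (g \o f).
Proof.
move=> [lf [M1 h1]] [lg [M2 h2]]; split; first exact: (@clinear_comp _ _ _ _ _ _ lf lg).
exists (`|M2| * `|M1|) => u /=.
apply: (le_trans (@bound_abs _ _ _ _ _ h2 (f u))).
rewrite -mulrA; apply: ler_wpM2l => //.
exact: (@bound_abs _ _ _ _ _ h1 u).
Qed.

Lemma clinear_add (R : realType) (U V : lmodType R[i]) (f : U -> V) :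
  clinear f -> forall u v, f (u + v) = f u + f v.
Proof. by move=> hf u v; have := hf 1 u v; rewrite !scale1r. Qed.

Lemma clinear_0 (R : realType) (U V : lmodType R[i]) (f : U -> V) :
  clinear f -> f 0 = 0.
Proof.
move=> hf; have := @clinear_add _ _ _ _ hf 0 0; rewrite addr0 => h.
by apply: (@addrI _ (f 0)); rewrite addr0 -h.
Qed.

Theorem mainTheorem5 (R : realType) (K : completeNormedModType R[i])
    (Cop : K -> 'cV[R[i]]_2) (Az X A : K -> K) (B : 'cV[R[i]]_2 -> K)
    (s1 : 'M[R[i]]_2) (D : set K) (Xinv : K -> K) :
  is_krein_space K ->
  is_node Cop Az X A B s1 D ->
  (* the node is invertible: X has the bounded inverse Xinv, which maps D(A) into D(A) *)
  bounded_op Xinv -> cancel X Xinv -> cancel Xinv X -> Xinv @` D `<=` D ->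
  is_node (Cop \o Xinv) A Xinv Az (Xinv \o B) s1 D.
Proof.
move=> _ [hs [hC [hX [hB [hA [hAz [hXD heq]]]]]]] hXi XK XiK hXiD.
split; first exact: hs.
split; first exact: (@bounded_comp _ _ _ _ _ _ hXi hC).
split; first exact: hXi.
split; first exact: (@bounded_comp _ _ _ _ _ _ hB hXi).
split; first exact: hAz.
split; first exact: hA.
split; first exact: hXiD.
move=> u Du /=.
have Dv : D (Xinv u) by apply: hXiD; exists u.
have := heq _ Dv; rewrite XiK => e.
have := congr1 Xinv e.
rewrite (@clinear_0 _ _ _ _ hXi.1) !(@clinear_add _ _ _ _ hXi.1) XK => <-.
by rewrite (addrC (Xinv (A u))).
Qed.
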